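(* The maps $\operatorname{st}:\mathbf{PP}[I]\to\mathbf{\Sigma}^*[I]$ and $\operatorname{st}:\mathbf{wPP}[I]\to\mathbf{w\Sigma}^*[I]$ defined on basis elements by $$\operatorname{st}(p)=\sum_{l\text{ prelinear extension of }p} l,\qquad \operatorname{st}(w,p)=\sum_{(v,l)\text{ weighted prelinear extension of }(w,p)}(v,l)$$ are morphisms of Hopf monoids.
   Context: A preposet on a finite set $I$ is a reflexive transitive relation $\le$; write $x\sim y$ if $x\le y$ and $y\le x$, and $x<y$ if $x\le y$ and $y\not\le x$; $|q|$ is the number of $\sim$-classes. A total preposet (total preorder) is identified with the ordered set partition $F_1|\cdots|F_k$ of its classes, listed increasingly. A prelinear extension of a preposet $q$ is a total preposet $l$ on $I$ such that $x\le_q y\Rightarrow x\le_l y$ and $x<_q y\Rightarrow x<_l y$ (so each class of $q$ lies in a class of $l$). A weighted preposet $(w,q)$ assigns a real weight to each class of $q$; a weighted prelinear extension $(v,l)$ of it is a prelinear extension $l$ with $v(L)=\sum_{Q\subseteq L}w(Q)$ for each class $L$ of $l$ (sum over classes $Q$ of $q$). $S\subseteq I$ is a lower ideal of $q$ if $y\in S$, $x\le_q y$ imply $x\in S$. $\mathbf{PP}[I]$ (resp. $\mathbf{wPP}[I]$) is the vector space with basis the (weighted) preposets on $I$; it is a Hopf monoid with product the disjoint union (weights carried along) and coproduct $\Delta_{S,T}(q)=q|_S\otimes q|_T$ if $S$ is a lower ideal of $q$ and $0$ otherwise (restricting weights). An ordered set partition of $I$ is a sequence $F_1|\cdots|F_k$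 of nonempty disjoint blocks with union $I$; $F|_S$ is obtained from $(F_1\cap S)|\cdots|(F_k\cap S)$ by deleting empty blocks; $H$ on $S\sqcup T$ is a quasi-shuffle of $F$ on $S$ and $G$ on $T$ if $H|_S=F$, $H|_T=G$. $\mathbf{\Sigma}^*[I]$ has basis the ordered set partitions of $I$, product $F\cdot G=\sum H$ over quasi-shuffles, and coproduct $\Delta_{S,T}(F_1|\cdots|F_k)=(F_1|\cdots|F_j)\otimes(F_{j+1}|\cdots|F_k)$ if $S=F_1\sqcup\cdots\sqcup F_j$ for some $j$, and $0$ otherwise. $\mathbf{w\Sigma}^*$ is the weighted analogue: weighted ordered set partitions, quasi-shuffles in which a merged block $F_a\sqcup G_b$ gets weight $u(F_a)+v(G_b)$ and other blocks keep their weights, and the same deconcatenation coproduct with restricted weights. *)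

(* Defs.v *)
From HB Require Import structures.
From mathcomp Require Import all_boot all_order all_algebra all_fingroup.
From mathcomp Require Import finmap.
From mathcomp.multinomials Require Import monalg.
From mathcomp Require Import reals.

Set Implicit Arguments.
Unset Strict Implicit.
Unset Printing Implicit Defensive.

Import GRing.Theory.
Local Open Scope ring_scope.

Section Free.
Variable k : fieldType.

Definition linext (A B : choiceType) (h : A -> {malg k[B]}) (x : {malg k[A]})
  : {malg k[B]} :=
  \sum_(a <- msupp x) mcoeff a x *: h a.

(* tensor product of vectors: the free space on A * B is the tensor
   product of the free spaces on A and on B *)
Definition tens (A B : choiceType) (u : {malg k[A]}) (v : {malg k[B]})
  : {malg k[(A * B)%type]} :=
  \sum_(a <- msupp u) \sum_(b <- msupp v) (mcoeff a u * mcoeff b v) *: << (a, b) >>.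

Definition tensmap (A A' B B' : choiceType)
  (f : {malg k[A]} -> {malg k[A']}) (g : {malg k[B]} -> {malg k[B']})
  (x : {malg k[(A * B)%type]}) : {malg k[(A' * B')%type]} :=
  linext (fun ab => tens (f << ab.1 >>) (g << ab.2 >>)) x.

Definition inspan (A : choiceType) (P : A -> bool) (x : {malg k[A]}) : Prop :=
  forall a, a \in msupp x -> P a.

End Free.

(* Species are evaluated on finite subsets I of a finite universe T.   *)
(* Relabellings along bijections are given by permutations of T.       *)

Section Combinatorics.
Variable T : finType.

Definition pdom (p : {set T * T}) : {set T} := [set x | (x, x) \in p].

Definition is_preposet (I : {set T}) (p : {set T * T}) : bool :=
  [&& p \subset setX I I,
      [forall x in I, (x, x) \in p] &
      [forall x, forall y, forall z,
          ((x, y) \in p) && ((y, z) \in p) ==> ((x, z) \in p)]].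

Definition ple (p : {set T * T}) x y := (x, y) \in p.
Definition plt (p : {set T * T}) x y := ((x, y) \in p) && ((y, x) \notin p).

Definition lower_ideal (p : {set T * T}) (S : {set T}) : bool :=
  [forall x, forall y, ple p x y && (y \in S) ==> (x \in S)].

Definition prestr (p : {set T * T}) (S : {set T}) : {set T * T} :=
  p :&: setX S S.

Definition is_total (I : {set T}) (l : {set T * T}) : bool :=
  is_preposet I l && [forall x in I, forall y in I, ple l x y || ple l y x].

Definition prelin_ext (l q : {set T * T}) : bool :=
  is_total (pdom q) l &&
  [forall x, forall y, (ple q x y ==> ple l x y) && (plt q x y ==> plt l x y)].

Definition pclass (p : {set T * T}) (x : T) : {set T} :=
  [set y | ((x, y) \in p) && ((y, x) \in p)].

Definition is_class (p : {set T * T}) (Q : {set T}) : bool :=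
  [exists x, (x \in pdom p) && (Q == pclass p x)].

Definition is_osp (I : {set T}) (F : seq {set T}) : bool :=
  [&& all (fun B => B != set0) F,
      pairwise (fun A B : set_of T => [disjoint A & B]) F &
      \bigcup_(B <- F) B == I].

Definition osp_ground (F : seq {set T}) : {set T} := \bigcup_(B <- F) B.

Definition osp_restr (F : seq {set T}) (S : {set T}) : seq {set T} :=
  [seq B <- [seq B :&: S | B <- F] | B != set0].

(* The total preposet whose classes, listed increasingly, are F_1,...,F_k *)
Definition osp_rel (F : seq {set T}) : {set T * T} :=
  [set xy | [exists i : 'I_(size F), exists j : 'I_(size F),
              [&& (i <= j)%N, xy.1 \in nth set0 F i & xy.2 \in nth set0 F j]]].

(* Finite sum over all ordered set partitions F of I satisfying P.
   (Every ordered set partition of I has at most #|T| blocks.) *)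
Definition osp_sum (V : zmodType) (I : {set T}) (P : seq {set T} -> bool)
  (f : seq {set T} -> V) : V :=
  \sum_(n < #|T|.+1) \sum_(t : n.-tuple {set T} | is_osp I t && P t) f t.

End Combinatorics.

Section Unweighted.
Variables (T : finType) (k : fieldType).

Notation PPb := {set T * T}.
Notation Sb := (seq {set T}).

Definition PP_in (I : {set T}) (p : PPb) : bool := is_preposet I p.
Definition Sig_in (I : {set T}) (F : Sb) : bool := is_osp I F.

Definition PP_one : PPb := set0.
Definition Sig_one : Sb := [::].

Definition PP_relabel (s : {perm T}) (p : PPb) : PPb :=
  [set (s xy.1, s xy.2) | xy in p].
Definition Sig_relabel (s : {perm T}) (F : Sb) : Sb := map (fun B : {set T} => (s : T -> T) @: B) F.

Definition PP_mul (pq : PPb * PPb) : {malg k[PPb]} := << pq.1 :|: pq.2 >>.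

Definition PP_comul (S U : {set T}) (p : PPb) : {malg k[(PPb * PPb)%type]} :=
  if lower_ideal p S then << (prestr p S, prestr p U) >> else 0.

(* product on basis elements: sum of quasi-shuffles *)
Definition Sig_mul (FG : Sb * Sb) : {malg k[Sb]} :=
  let S := osp_ground FG.1 in let U := osp_ground FG.2 in
  osp_sum (S :|: U)
    (fun H => (osp_restr H S == FG.1) && (osp_restr H U == FG.2))
    (fun H => << H >>).

Definition Sig_comul (S U : {set T}) (F : Sb) : {malg k[(Sb * Sb)%type]} :=
  \sum_(j < (size F).+1 | osp_ground (take j F) == S) << (take j F, drop j F) >>.

Definition st_PP_basis (p : PPb) : {malg k[Sb]} :=
  osp_sum (pdom p) (fun F => prelin_ext (osp_rel F) p) (fun F => << F >>).

Definition st_PP : {malg k[PPb]} -> {malg k[Sb]} := linext st_PP_basis.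

End Unweighted.

Section Weighted.
Variables (T : finType) (k : fieldType) (R : realType).

(* a weighted preposet: a preposet p together with the weight w Q of
   each class Q of p (w vanishes on subsets that are not classes) *)
Notation wPPb := ({set T * T} * {ffun {set T} -> R})%type.
Notation wSb := (seq ({set T} * R)).

Definition wPP_in (I : {set T}) (pw : wPPb) : bool :=
  is_preposet I pw.1 && [forall Q, ~~ is_class pw.1 Q ==> (pw.2 Q == 0)].
Definition wSig_in (I : {set T}) (F : wSb) : bool := is_osp I (map fst F).

Definition wPP_one : wPPb := (set0, [ffun => 0]).
Definition wSig_one : wSb := [::].

Definition wPP_relabel (s : {perm T}) (pw : wPPb) : wPPb :=
  (PP_relabel s pw.1, [ffun Q : {set T} => pw.2 ((s^-1)%g @: Q)]).
Definition wSig_relabel (s : {perm T}) (F : wSb) : wSb :=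
  map (fun B : {set T} * R => ((s : T -> T) @: B.1, B.2)) F.

Definition wPP_mul (pq : wPPb * wPPb) : {malg k[wPPb]} :=
  << (pq.1.1 :|: pq.2.1, [ffun Q : {set T} => pq.1.2 Q + pq.2.2 Q]) >>.

Definition wrestr (w : {ffun {set T} -> R}) (S : {set T}) : {ffun {set T} -> R} :=
  [ffun Q : {set T} => if Q \subset S then w Q else 0].

Definition wPP_comul (S U : {set T}) (pw : wPPb) : {malg k[(wPPb * wPPb)%type]} :=
  if lower_ideal pw.1 S then
    << ((prestr pw.1 S, wrestr pw.2 S), (prestr pw.1 U, wrestr pw.2 U)) >>
  else 0.

(* weight of the block of F equal to X (0 if there is none, e.g. X = set0) *)
Definition wlookup (F : wSb) (X : {set T}) : R :=
  \sum_(B <- F | B.1 == X) B.2.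

(* weighted quasi-shuffles: a block H_c gets weight u(H_c \cap S) + v(H_c \cap U),
   i.e. u(F_a)+v(G_b) for merged blocks, and its old weight otherwise *)
Definition wSig_mul (FG : wSb * wSb) : {malg k[wSb]} :=
  let S := osp_ground (map fst FG.1) in let U := osp_ground (map fst FG.2) in
  osp_sum (S :|: U)
    (fun H => (osp_restr H S == map fst FG.1) && (osp_restr H U == map fst FG.2))
    (fun H => << [seq (B, wlookup FG.1 (B :&: S) + wlookup FG.2 (B :&: U)) | B <- H] >>).

Definition wSig_comul (S U : {set T}) (F : wSb) : {malg k[(wSb * wSb)%type]} :=
  \sum_(j < (size F).+1 | osp_ground (take j (map fst F)) == S)
     << (take j F, drop j F) >>.

Definition st_wPP_basis (pw : wPPb) : {malg k[wSb]} :=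
  osp_sum (pdom pw.1) (fun F => prelin_ext (osp_rel F) pw.1)
    (fun F => << map (fun L : {set T} =>
                   (L, \sum_(Q : {set T} | is_class pw.1 Q && (Q \subset L)) pw.2 Q)) F >>).

Definition st_wPP : {malg k[wPPb]} -> {malg k[wSb]} := linext st_wPP_basis.

End Weighted.

(* Morphisms of Hopf monoids between two Hopf monoids (over the finite
   subsets of T) presented on bases:
   - inA I a       : a is a basis element of A[I];
   - relA s a      : relabelling of a along the bijection s;
   - muA (a, b)    : product of basis elements a in A[S], b in A[U];
   - deltaA S U a  : coproduct Delta_{S,U} of the basis element a of A[S \sqcup U];
   - oneA          : the basis element of A[set0] (the unit);
   the counit of A[set0] is the coefficient of oneA. *)

Definition hopf_monoid_morphism (T : finType) (k : fieldType) (A B : choiceType)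
  (inA : {set T} -> A -> bool) (inB : {set T} -> B -> bool)
  (relA : {perm T} -> A -> A) (relB : {perm T} -> B -> B)
  (muA : A * A -> {malg k[A]}) (muB : B * B -> {malg k[B]})
  (deltaA : {set T} -> {set T} -> A -> {malg k[(A * A)%type]})
  (deltaB : {set T} -> {set T} -> B -> {malg k[(B * B)%type]})
  (oneA : A) (oneB : B)
  (f : {malg k[A]} -> {malg k[B]}) : Prop :=
  (
      forall (c : k) (x y : {malg k[A]}), f (c *: x + y) = c *: f x + f y) /\
      (forall (I : {set T}) (x : {malg k[A]}), inspan (inA I) x -> inspan (inB I) (f x)) /\
      (forall (s : {perm T}) (x : {malg k[A]}),
        f (linext (fun a => << relA s a >>) x) = linext (fun b => << relB s b >>) (f x)) /\
      (f << oneA >> = << oneB >>) /\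
      (forall x : {malg k[A]}, inspan (inA set0) x -> mcoeff oneB (f x) = mcoeff oneA x) /\
      (forall (S U : {set T}) (x : {malg k[(A * A)%type]}), [disjoint S & U] ->
        inspan (fun ab => inA S ab.1 && inA U ab.2) x ->
        f (linext muA x) = linext muB (tensmap f f x)) /\
      (forall (S U : {set T}) (x : {malg k[A]}), [disjoint S & U] ->
        inspan (inA (S :|: U)) x ->
        tensmap f f (linext (deltaA S U) x) = linext (deltaB S U) (f x)).

(* Main.v *)
Require Import Defs.
From HB Require Import structures.
From mathcomp Require Import all_boot all_order all_algebra all_fingroup.
From mathcomp Require Import finmap.
From mathcomp.multinomials Require Import monalg.
From mathcomp Require Import reals.

Set Implicit Arguments.
Unset Strict Implicit.
Unset Printing Implicit Defensive.
Import GRing.Theory.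
Local Open Scope ring_scope.

Section Lin.
Variable k : fieldType.

Definition lin (U V : lmodType k) (f : U -> V) :=
  forall c x y, f (c *: x + y) = c *: f x + f y.

Lemma lin0 (U V : lmodType k) (f : U -> V) : lin f -> f 0 = 0.
Proof.
move=> hf; have h := hf 1 0 0; rewrite !scale1r addr0 in h.
by apply: (addrI (f 0)); rewrite addr0 -h.
Qed.

Lemma linD (U V : lmodType k) (f : U -> V) : lin f -> forall x y, f (x + y) = f x + f y.
Proof. by move=> hf x y; have := hf 1 x y; rewrite !scale1r. Qed.

Lemma linZ (U V : lmodType k) (f : U -> V) : lin f -> forall c x, f (c *: x) = c *: f x.
Proof. by move=> hf c x; rewrite -[c *: x]addr0 hf lin0 // addr0. Qed.

Lemma lin_sum (U V : lmodType k) (f : U -> V) (I : Type) (r : seq I) (P : pred I) F :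
  lin f -> f (\sum_(i <- r | P i) F i) = \sum_(i <- r | P i) f (F i).
Proof. by move=> hf; apply: (big_morph f (linD hf) (lin0 hf)). Qed.

Lemma lin_comp (U V W : lmodType k) (f : U -> V) (g : V -> W) : lin f -> lin g -> lin (g \o f).
Proof. by move=> hf hg c x y /=; rewrite hf hg. Qed.

Lemma malgUZ (A : choiceType) (c : k) (a : A) : << c *g a >> = c *: << a >> :> {malg k[A]}.
Proof. by apply/malgP => b; rewrite mcoeffZ !mcoeffU mulr_natr. Qed.

Lemma lin_span (A : choiceType) (V : lmodType k) (P : A -> bool) (f g : {malg k[A]} -> V) x :
  lin f -> lin g -> (forall a, P a -> f << a >> = g << a >>) -> inspan P x -> f x = g x.
Proof.
move=> hf hg hfg hx; rewrite (monalgE x) !lin_sum // !big_seq; apply: eq_bigr => a ha.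
by rewrite malgUZ !linZ // hfg // hx.
Qed.

Section LinExt.
Variables (A B : choiceType).

Lemma linextEw (h : A -> {malg k[B]}) (x : {malg k[A]}) (D : {fset A}) :
  (msupp x `<=` D)%fset -> linext h x = \sum_(a <- D) x@_a *: h a.
Proof.
move=> sub; rewrite /linext (big_fset_incl _ sub) // => a _ /mcoeff_outdom ->.
by rewrite scale0r.
Qed.

Lemma linext_lin (h : A -> {malg k[B]}) : lin (linext h : {malg k[A]} -> {malg k[B]}).
Proof.
move=> c x y; set D := (msupp x `|` msupp y `|` msupp (c *: x + y))%fset.
have s1 : (msupp x `<=` D)%fset by rewrite /D; apply/fsubsetP=> a ha; rewrite !in_fsetU ha.
have s2 : (msupp y `<=` D)%fset by rewrite /D; apply/fsubsetP=> a ha; rewrite !in_fsetU ha orbT.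
have s3 : (msupp (c *: x + y) `<=` D)%fset by rewrite /D; apply/fsubsetP=> a ha; rewrite !in_fsetU ha orbT.
rewrite !(linextEw h (D := D)) //.
rewrite scaler_sumr -big_split; apply: eq_bigr => a _.
by rewrite mcoeffD mcoeffZ scalerDl scalerA.
Qed.

Lemma linextU (h : A -> {malg k[B]}) a : linext h << a >> = h a.
Proof. by rewrite /linext msuppU oner_eq0 big_seq_fset1 mcoeffUU scale1r. Qed.

Lemma linext_hlin (c : k) (h1 h2 : A -> {malg k[B]}) x :
  linext (fun a => c *: h1 a + h2 a) x = c *: linext h1 x + linext h2 x.
Proof.
rewrite /linext scaler_sumr -big_split; apply: eq_bigr => a _.
by rewrite scalerDr !scalerA mulrC.
Qed.

Lemma linext_ext (h1 h2 : A -> {malg k[B]}) x : (forall a, h1 a = h2 a) ->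
  linext h1 x = linext h2 x.
Proof. by move=> e; apply: eq_bigr => a _; rewrite e. Qed.

End LinExt.

Lemma tensE (A B : choiceType) (u : {malg k[A]}) (v : {malg k[B]}) :
  tens u v = linext (fun a => linext (fun b => << (a, b) >>) v) u.
Proof.
rewrite /tens /linext; apply: eq_bigr => a _; rewrite scaler_sumr.
by apply: eq_bigr => b _; rewrite scalerA.
Qed.

Lemma tens_linl (A B : choiceType) (v : {malg k[B]}) : lin (fun u : {malg k[A]} => tens u v).
Proof. by move=> c x y; rewrite !tensE linext_lin. Qed.

Lemma tens_linr (A B : choiceType) (u : {malg k[A]}) : lin (fun v : {malg k[B]} => tens u v).
Proof.
move=> c x y; rewrite !tensE -linext_hlin; apply: linext_ext => a.
by rewrite linext_lin.
Qed.

Lemma tensUU (A B : choiceType) (a : A) (b : B) : tens (<< a >> : {malg k[A]}) (<< b >> : {malg k[B]}) = << (a, b) >>.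
Proof. by rewrite tensE !linextU. Qed.

Lemma tensmapU (A A' B B' : choiceType) f g (a : A) (b : B) :
  tensmap (A':=A') (B':=B') f g (<< (a, b) >> : {malg k[(A * B)%type]}) = tens (f << a >>) (g << b >>).
Proof. by rewrite /tensmap linextU. Qed.

Lemma inspan0 (A : choiceType) (P : A -> bool) : inspan P (0 : {malg k[A]}).
Proof. by move=> a; rewrite msupp0. Qed.

Lemma inspanD (A : choiceType) (P : A -> bool) (x y : {malg k[A]}) :
  inspan P x -> inspan P y -> inspan P (x + y).
Proof.
move=> hx hy a /(fsubsetP (msuppD_le x y)); rewrite in_fsetU => /orP[]; [exact: hx|exact: hy].
Qed.

Lemma inspanZ (A : choiceType) (P : A -> bool) c (x : {malg k[A]}) :
  inspan P x -> inspan P (c *: x).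
Proof. by move=> hx a /(fsubsetP (msuppZ_le c x)); apply: hx. Qed.

Lemma inspanU (A : choiceType) (P : A -> bool) a : P a -> inspan P (<< a >> : {malg k[A]}).
Proof. by move=> Pa b; rewrite msuppU oner_eq0 in_fset1 => /eqP ->. Qed.

Lemma inspan_sum (A : choiceType) (P : A -> bool) (I : Type) (r : seq I) (Q : pred I) F :
  (forall i, Q i -> inspan P (F i)) -> inspan P (\sum_(i <- r | Q i) F i : {malg k[A]}).
Proof.
move=> h; elim/big_rec: _ => [|i x Qi hx]; [exact: inspan0|exact: inspanD (h _ Qi) hx].
Qed.

Lemma inspan_linext (A B : choiceType) (P : A -> bool) (Q : B -> bool) (h : A -> {malg k[B]}) (x : {malg k[A]}) :
  inspan P x -> (forall a, P a -> inspan Q (h a)) -> inspan Q (linext h x).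
Proof.
move=> hx hh; rewrite /linext big_seq; apply: inspan_sum => a /hx Pa.
exact/inspanZ/hh.
Qed.

End Lin.
Section Comb.
Variable T : finType.
Implicit Types (F A B : seq {set T}) (S U I X C D : {set T}).
Local Open Scope nat_scope.

Fixpoint rr F (x y : T) : bool :=
  if F is C :: F' then ((x \in C) && ((y \in C) || (y \in osp_ground F'))) || rr F' x y
  else false.

Lemma ground_nil : osp_ground [::] = set0 :> {set T}.
Proof. by rewrite /osp_ground big_nil. Qed.

Lemma ground_cons C F : osp_ground (C :: F) = C :|: osp_ground F.
Proof. by rewrite /osp_ground big_cons. Qed.

Lemma ground_cat A B : osp_ground (A ++ B) = osp_ground A :|: osp_ground B.
Proof. by rewrite /osp_ground big_cat. Qed.

Lemma mem_ground F x : (x \in osp_ground F) = has (fun C => x \in C) F.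
Proof.
elim: F => [|C F IH]; first by rewrite ground_nil in_set0.
by rewrite ground_cons in_setU IH.
Qed.

Lemma rrP F x y : reflect (exists i j, [&& i <= j, j < size F, x \in nth set0 F i & y \in nth set0 F j]) (rr F x y).
Proof.
elim: F => [|C F IH] /=.
  by constructor; case=> i [j]; rewrite andbF.
apply: (iffP idP).
- case/orP => [/andP[xC /orP[yC|yF]] | /IH [i [j /and4P[ij jn xi yj]]]].
  + by exists 0%N, 0%N; rewrite /= xC yC.
  + move: yF; rewrite mem_ground => /(has_nthP set0) [j jn yj].
    by exists 0%N, j.+1; rewrite /= xC yj ltnS jn.
  + by exists i.+1, j.+1; rewrite /= ltnS ij ltnS jn xi yj.
- case=> [[|i] [[|j] /and4P[ij jn xi yj]]] /=.
  + by rewrite xi yj.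
  + rewrite xi /=; apply/orP; left; apply/orP; right; rewrite mem_ground.
    by apply/(has_nthP set0); exists j.
  + by [].
  + by apply/orP; right; apply/IH; exists i, j; rewrite -ltnS ij -ltnS jn xi yj.
Qed.

Lemma osp_relE F : osp_rel F = [set xy | rr F xy.1 xy.2].
Proof.
apply/setP => -[x y]; rewrite !inE /=; apply/existsP/rrP.
- case=> i /existsP [j /and3P[ij xi yj]]; exists i, j.
  by rewrite ij ltn_ord xi yj.
- case=> i [j /and4P[ij jn xi yj]].
  have iF : (i < size F)%N by apply: leq_ltn_trans ij jn.
  exists (Ordinal iF); apply/existsP; exists (Ordinal jn); by rewrite /= ij xi yj.
Qed.

Lemma mem_osp_rel F x y : ((x, y) \in osp_rel F) = rr F x y.
Proof. by rewrite osp_relE inE. Qed.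

Lemma rr_ground F x y : rr F x y -> (x \in osp_ground F) && (y \in osp_ground F).
Proof.
elim: F => [//|C F IH] /=; rewrite !ground_cons !in_setU.
case/orP => [/andP[-> /orP[->|->]]|/IH/andP[-> ->]]; by rewrite ?orbT.
Qed.

Lemma rr_cat A B x y :
  rr (A ++ B) x y = [|| rr A x y, (x \in osp_ground A) && (y \in osp_ground B) | rr B x y].
Proof.
elim: A => [|C A IH] /=; first by rewrite ground_nil in_set0.
rewrite IH ground_cat ground_cons !in_setU.
move: (x \in C) (y \in C) (y \in osp_ground A) (y \in osp_ground B) (rr A x y)
  (x \in osp_ground A) (rr B x y) => a b c d e f g.
by case: a; case: b; case: c; case: d; case: e; case: f; case: g.
Qed.

Lemma restr_nil S : osp_restr [::] S = [::].
Proof. by []. Qed.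

Lemma restr_cons C F S : osp_restr (C :: F) S =
  if C :&: S != set0 then (C :&: S) :: osp_restr F S else osp_restr F S.
Proof. by []. Qed.

Lemma ground_restr F S : osp_ground (osp_restr F S) = osp_ground F :&: S.
Proof.
elim: F => [|C F IH]; first by rewrite restr_nil ground_nil set0I.
rewrite restr_cons ground_cons setIUl; case: ifP => [_|/negbFE/eqP ->].
  by rewrite ground_cons IH.
by rewrite set0U IH.
Qed.

Lemma rr_restr F S x y : rr (osp_restr F S) x y = [&& x \in S, y \in S & rr F x y].
Proof.
elim: F => [|C F IH]; first by rewrite restr_nil /= !andbF.
rewrite restr_cons /=; case: ifP => [_|/negbFE/eqP CS].
  rewrite /= IH ground_restr !in_setI.
  move: (x \in C) (y \in C) (y \in osp_ground F) (rr F x y) (x \in S) (y \in S) => a b c d e f.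
  by case: a; case: b; case: c; case: d; case: e; case: f.
rewrite IH; have xCS : (x \in C) -> (x \in S) -> False.
  by move=> h1 h2; have := in_set0 x; rewrite -CS in_setI h1 h2.
case xS: (x \in S); case xC: (x \in C) => //=; exfalso; exact: xCS.
Qed.

Lemma disjointP C D : reflect (forall x, x \in C -> x \notin D) [disjoint C & D].
Proof. rewrite disjoint_subset; apply: (iffP subsetP) => h x /h; by rewrite inE. Qed.

Lemma disjU C D E : [disjoint C & D :|: E] = [disjoint C & D] && [disjoint C & E].
Proof.
apply/disjointP/andP => [h|[/disjointP h1 /disjointP h2] x xC].
  by split; apply/disjointP => x /h; rewrite in_setU negb_or => /andP[].
by rewrite in_setU negb_or h1 ?h2.
Qed.

Lemma all_disj_ground C F :
  all (fun D : {set T} => [disjoint C & D]) F = [disjoint C & osp_ground F].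
Proof.
elim: F => [|D F IH] /=.
  by rewrite ground_nil; symmetry; apply/disjointP => x _; rewrite in_set0.
by rewrite IH ground_cons disjU.
Qed.

Definition ospl F := all (fun C => C != set0) F &&
  pairwise (fun A B : {set T} => [disjoint A & B]) F.

Lemma ospE I F : is_osp I F = ospl F && (osp_ground F == I).
Proof. by rewrite /is_osp /ospl andbA. Qed.

Lemma ospl_nil : ospl [::].
Proof. by []. Qed.

Lemma ospl_cons C F :
  ospl (C :: F) = [&& C != set0, [disjoint C & osp_ground F] & ospl F].
Proof.
rewrite /ospl /= -all_disj_ground.
by case: (C != set0); case: (all _ F); case: (all _ F); case: (pairwise _ F).
Qed.

Lemma ospl_cat A B : ospl (A ++ B) =
  [&& ospl A, ospl B & [disjoint osp_ground A & osp_ground B]].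
Proof.
elim: A => [|C A IH].
  rewrite /= ground_nil; have -> : [disjoint set0 & osp_ground B] by apply/disjointP => x; rewrite in_set0.
  by rewrite andbT.
rewrite cat_cons !ospl_cons IH ground_cat ground_cons disjU.
have -> : [disjoint C :|: osp_ground A & osp_ground B] =
  [disjoint osp_ground B & C] && [disjoint osp_ground B & osp_ground A].
  by rewrite disjoint_sym disjU.
rewrite ![[disjoint osp_ground B & _]]disjoint_sym.
move: (C != set0) [disjoint C & osp_ground A] [disjoint C & osp_ground B] (ospl A) (ospl B)
  [disjoint osp_ground A & osp_ground B] => a b c d e f.
by case: a; case: b; case: c; case: d; case: e; case: f.
Qed.

Lemma ospl_restr F S : ospl F -> ospl (osp_restr F S).
Proof.
elim: F => [//|C F IH]; rewrite ospl_cons restr_cons => /and3P[_ dC oF].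
case: ifP => [ne|_]; last exact: IH.
rewrite ospl_cons ne IH // andbT ground_restr.
by apply: disjointW dC; apply/subsetP=> x; rewrite in_setI => /andP[].
Qed.

Lemma osp_restr_osp I F S : is_osp I F -> is_osp (I :&: S) (osp_restr F S).
Proof. by rewrite !ospE => /andP[oF /eqP gF]; rewrite ospl_restr // ground_restr gF eqxx. Qed.

Lemma rr_refl F x : x \in osp_ground F -> rr F x x.
Proof.
elim: F => [|C F IH]; first by rewrite ground_nil in_set0.
rewrite ground_cons in_setU /= => /orP[->|/IH ->]; by rewrite ?orbT.
Qed.

Lemma rr_total F x y : x \in osp_ground F -> y \in osp_ground F -> rr F x y || rr F y x.
Proof.
elim: F => [|C F IH]; first by rewrite ground_nil in_set0.
rewrite !ground_cons !in_setU /=.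
case xC: (x \in C); case yC: (y \in C) => //= xF yF; by rewrite ?yF ?xF ?orbT ?IH.
Qed.

Lemma rr_trans F x y z : ospl F -> rr F x y -> rr F y z -> rr F x z.
Proof.
elim: F => [//|C F IH]; rewrite ospl_cons => /and3P[_ dC oF] /=.
case/orP => [/andP[xC _] hyz | hxy hyz].
  have /andP[_] := @rr_ground (C :: F) y z hyz; rewrite ground_cons in_setU xC /= => ->.
  by [].
have /andP[_ yF] := rr_ground hxy.
have yC : (y \in C) = false by apply/negP => /(disjointP _ _ dC); rewrite yF.
move: hyz; rewrite yC /= => hyz; apply/orP; right; exact: IH.
Qed.

Lemma osp_total F : ospl F -> is_total (osp_ground F) (osp_rel F).
Proof.
move=> oF; apply/andP; split; last first.
  apply/forall_inP => x xg; apply/forall_inP => y yg.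
  by rewrite /ple !mem_osp_rel rr_total.
apply/and3P; split.
- apply/subsetP => -[x y]; rewrite mem_osp_rel => /rr_ground/andP[xg yg].
  by rewrite in_setX xg yg.
- by apply/forall_inP => x xg; rewrite mem_osp_rel rr_refl.
- apply/forallP => x; apply/forallP => y; apply/forallP => z; apply/implyP.
  rewrite !mem_osp_rel => /andP[]; exact: rr_trans.
Qed.

Lemma ospl_size F : ospl F -> size F <= #|osp_ground F|.
Proof.
elim: F => [//|C F IH]; rewrite ospl_cons => /and3P[ne dC oF].
rewrite ground_cons cardsU.
have -> : C :&: osp_ground F = set0.
  apply/setP => x; rewrite in_setI in_set0; apply/negP => /andP[xC xF].
  by move: (disjointP _ _ dC x xC); rewrite xF.
rewrite cards0 subn0 /= -add1n leq_add // ?IH //.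
by rewrite card_gt0.
Qed.

Lemma osp_size I F : is_osp I F -> size F < #|T|.+1.
Proof.
rewrite ospE => /andP[/ospl_size h _]; rewrite ltnS; apply: leq_trans h _.
exact: max_card.
Qed.

End Comb.
Section OspSum.
Variables (T : finType) (V : zmodType).
Implicit Types (F A B : seq {set T}) (S U I C D : {set T}) (X : seq {set T}) (P Q : pred (seq {set T})).

Lemma osp_sum_eq I P (f g : seq {set T} -> V) :
  (forall F, is_osp I F -> P F -> f F = g F) -> osp_sum I P f = osp_sum I P g.
Proof.
move=> h; apply: eq_bigr => n _; apply: eq_bigr => t /andP[o p]; exact: h.
Qed.

Lemma osp_sum_eqP I P Q (f : seq {set T} -> V) :
  (forall F, is_osp I F -> P F = Q F) -> osp_sum I P f = osp_sum I Q f.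
Proof.
move=> h; apply: eq_bigr => n _; apply: eq_bigl => t.
by case o: (is_osp I t); rewrite //= h.
Qed.

Lemma osp_sum_if I P Q (f : seq {set T} -> V) :
  osp_sum I P (fun F => if Q F then f F else 0) = osp_sum I (fun F => P F && Q F) f.
Proof.
apply: eq_bigr => n _; rewrite -big_mkcondr; apply: eq_bigl => t; by rewrite andbA.
Qed.

Lemma osp_sum_true I P (f : seq {set T} -> V) :
  osp_sum I P f = osp_sum I (fun _ => true) (fun F => if P F then f F else 0).
Proof. by rewrite osp_sum_if. Qed.

Lemma osp_sum_cif I P (b : bool) (f : seq {set T} -> V) :
  osp_sum I P (fun F => if b then f F else 0) = if b then osp_sum I P f else 0.
Proof. by case: b => //; rewrite /osp_sum big1 // => n _; rewrite big1. Qed.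

Lemma osp_sum_exchange (W : zmodType) I J P Q (h : seq {set T} -> seq {set T} -> W) :
  osp_sum I P (fun F => osp_sum J Q (h F)) = osp_sum J Q (fun G => osp_sum I P (fun F => h F G)).
Proof.
rewrite /osp_sum.
under eq_bigr => n _ do rewrite exchange_big.
rewrite exchange_big; apply: eq_bigr => m _.
under eq_bigr => n _ do rewrite exchange_big.
by rewrite exchange_big.
Qed.

Lemma osp_sum_sum (J : Type) (r : seq J) (Q : pred J) I (P : pred (seq {set T})) (h : J -> seq {set T} -> V) :
  \sum_(j <- r | Q j) osp_sum I P (h j) = osp_sum I P (fun F => \sum_(j <- r | Q j) h j F).
Proof.
rewrite /osp_sum exchange_big; apply: eq_bigr => n _; by rewrite exchange_big.
Qed.

Lemma osp_sum_ind I P X (c : seq {set T} -> V) :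
  osp_sum I P (fun F => if F == X then c F else 0) = if is_osp I X && P X then c X else 0.
Proof.
rewrite /osp_sum; case hX: (is_osp I X && P X).
  have sX := osp_size (andP hX).1.
  rewrite (bigD1 (Ordinal sX)) //= [X in _ + X]big1 ?addr0; last first.
    move=> n ne; apply: big1 => t _; case: eqP => // e.
    by move: ne; rewrite -val_eqE /= -e size_tuple eqxx.
  rewrite (bigD1 (in_tuple X)) /=; last by rewrite hX.
  rewrite [X in _ + X]big1 ?addr0 ?eqxx //.
  move=> t /andP[_ ne]; case: eqP => // e; move: ne; by rewrite -val_eqE /= e eqxx.
apply: big1 => n _; apply: big1 => t /andP[o p]; case: eqP => // e.
by move: hX; rewrite -e o p.
Qed.

Lemma sum_takedrop F F1 F2 (g : seq {set T} -> seq {set T} -> V) :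
  \sum_(j < (size F).+1) (if (take j F == F1) && (drop j F == F2) then g (take j F) (drop j F) else 0)
  = if F == F1 ++ F2 then g F1 F2 else 0.
Proof.
case: eqP => [->|ne].
  have j0 : (size F1 < (size (F1 ++ F2)).+1)%N by rewrite size_cat ltnS leq_addr.
  rewrite (bigD1 (Ordinal j0)) //= take_size_cat // drop_size_cat // !eqxx big1 ?addr0 //.
  move=> j nj; case: ifP => // /andP[/eqP e1 _]; exfalso; move: nj; rewrite -val_eqE /=.
  have h : size (take j (F1 ++ F2)) = j by rewrite size_takel // -ltnS ltn_ord.
  by rewrite e1 in h; rewrite h eqxx.
apply: big1 => j _; case: ifP => // /andP[/eqP e1 /eqP e2].
by exfalso; apply: ne; rewrite -e1 -e2 cat_take_drop.
Qed.

End OspSum.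

Lemma lin_osp_sum (k : fieldType) (V W : lmodType k) (T : finType) (f : V -> W) I (P : pred (seq {set T})) (g : seq {set T} -> V) :
  lin f -> f (osp_sum I P g) = osp_sum I P (fun F => f (g F)).
Proof.
move=> hf; rewrite /osp_sum lin_sum //; apply: eq_bigr => n _; by rewrite lin_sum.
Qed.
Section ProdCoprod.
Variables (T : finType) (V : zmodType).
Implicit Types (F A B H : seq {set T}) (S U I C D : {set T}) (P Q : pred (seq {set T})).

Lemma setUIl_id S U : (S :|: U) :&: S = S.
Proof. by apply/setP => x; rewrite !inE; case: (x \in S); rewrite ?andbF ?andbT ?orbT. Qed.

Lemma setUIr_id S U : (S :|: U) :&: U = U.
Proof. by apply/setP => x; rewrite !inE; case: (x \in U); rewrite ?andbF ?andbT ?orbT. Qed.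

Lemma osp_cat S U A B : [disjoint S & U] -> is_osp S A -> is_osp U B -> is_osp (S :|: U) (A ++ B).
Proof.
rewrite !ospE => dSU /andP[oA /eqP gA] /andP[oB /eqP gB].
by rewrite ospl_cat oA oB ground_cat gA gB dSU eqxx.
Qed.

Lemma prod_sum S U P1 P2 Pp (g : seq {set T} -> V) :
  [disjoint S & U] ->
  (forall H, is_osp (S :|: U) H -> Pp H = P1 (osp_restr H S) && P2 (osp_restr H U)) ->
  osp_sum S P1 (fun F => osp_sum U P2 (fun G =>
     osp_sum (S :|: U) (fun H => (osp_restr H S == F) && (osp_restr H U == G)) g))
  = osp_sum (S :|: U) Pp g.
Proof.
move=> dSU hP.
transitivity (osp_sum S P1 (fun F => osp_sum (S :|: U) xpredT (fun H => osp_sum U P2 (fun G =>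
   if F == osp_restr H S then (if G == osp_restr H U then g H else 0) else 0)))).
  apply: osp_sum_eq => F _ _; rewrite -osp_sum_exchange; apply: osp_sum_eq => G _ _.
  rewrite osp_sum_true; apply: osp_sum_eq => H _ _.
  by rewrite [F == _]eq_sym [G == _]eq_sym; case: (_ == F); case: (_ == G).
rewrite osp_sum_exchange [RHS]osp_sum_true; apply: osp_sum_eq => H oH _.
under osp_sum_eq => F _ _ do rewrite osp_sum_cif (osp_sum_ind _ _ _ (fun _ => g H)).
rewrite (osp_sum_ind _ _ _ (fun _ => if is_osp U (osp_restr H U) && P2 (osp_restr H U) then g H else 0)).
have oS := osp_restr_osp S oH; have oU := osp_restr_osp U oH.
rewrite setUIl_id in oS; rewrite setUIr_id in oU.
by rewrite hP // oS oU /=; case: (P1 _); case: (P2 _).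
Qed.

Lemma coprod_sum S U P1 P2 Pp (li : bool) (g : seq {set T} -> seq {set T} -> V) :
  [disjoint S & U] ->
  (forall F (j : nat), is_osp (S :|: U) F -> (j <= size F)%N ->
     (osp_ground (take j F) == S) && Pp F =
     [&& li, is_osp S (take j F), P1 (take j F), is_osp U (drop j F) & P2 (drop j F)]) ->
  osp_sum (S :|: U) Pp (fun F => \sum_(j < (size F).+1 | osp_ground (take j F) == S)
                                    g (take j F) (drop j F))
  = if li then osp_sum S P1 (fun F1 => osp_sum U P2 (fun F2 => g F1 F2)) else 0.
Proof.
move=> dSU hP; case: li hP => hP; last first.
  apply: big1 => n _; apply: big1 => t /andP[o p]; apply: big1 => j c.
  by exfalso; move: (hP t j o); rewrite c p /= -ltnS ltn_ord => /(_ isT).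
transitivity (osp_sum S P1 (fun F1 => osp_sum U P2 (fun F2 => osp_sum (S :|: U) xpredT (fun F =>
  \sum_(j < (size F).+1) (if F2 == drop j F then (if F1 == take j F then g (take j F) (drop j F) else 0) else 0))))); last first.
  apply: osp_sum_eq => F1 o1 _; apply: osp_sum_eq => F2 o2 _.
  have h := osp_sum_ind (S :|: U) xpredT (F1 ++ F2) (fun _ => g F1 F2).
  rewrite osp_cat //= in h; rewrite -h; apply: (osp_sum_eq (I := S :|: U) (P := xpredT)). move=> F _ _.
  rewrite -sum_takedrop; apply: eq_bigr => j _.
  rewrite ![_ == take _ _]eq_sym ![_ == drop _ _]eq_sym.
  by case: (take j F == F1) => //=; case: eqP.
rewrite osp_sum_true.
under [RHS]osp_sum_eq => F1 _ _ do rewrite osp_sum_exchange.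
rewrite [RHS]osp_sum_exchange; apply: (osp_sum_eq (I := S :|: U) (P := xpredT)) => F oF _.
under osp_sum_eq => F1 _ _ do rewrite -osp_sum_sum.
rewrite -osp_sum_sum big_mkcond /=.
transitivity (\sum_(i < (size F).+1) (if (osp_ground (take i F) == S) && Pp F then g (take i F) (drop i F) else 0)).
  case: (Pp F).
    by apply: eq_bigr => i _; rewrite andbT.
  by rewrite big1 // => i _; rewrite andbF.
apply: eq_bigr => j _.
under osp_sum_eq => F1 _ _ do rewrite (osp_sum_ind _ _ _ (fun _ => if F1 == take j F then g (take j F) (drop j F) else 0)).
rewrite osp_sum_cif (osp_sum_ind _ _ _ (fun _ => g (take j F) (drop j F))).
have := hP F j oF; rewrite -ltnS ltn_ord => /(_ isT).
move=> ->.
by case: (is_osp S _); case: (P1 _); case: (is_osp U _); case: (P2 _).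
Qed.

End ProdCoprod.
Section PreComb.
Variable T : finType.
Implicit Types (F A B H : seq {set T}) (S U I C D : {set T}) (p q : {set T * T}).
Local Open Scope nat_scope.

Lemma pp_mem I p x y : is_preposet I p -> (x, y) \in p -> (x \in I) && (y \in I).
Proof. by case/and3P => /subsetP sub _ _ /sub; rewrite in_setX. Qed.

Lemma pp_refl I p x : is_preposet I p -> x \in I -> (x, x) \in p.
Proof. by case/and3P => _ /forall_inP h _ /h. Qed.

Lemma pp_trans I p x y z : is_preposet I p -> (x, y) \in p -> (y, z) \in p -> (x, z) \in p.
Proof.
case/and3P => _ _ /forallP/(_ x)/forallP/(_ y)/forallP/(_ z)/implyP h a b.
by apply: h; rewrite a b.
Qed.

Lemma pdom_pp I p : is_preposet I p -> pdom p = I.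
Proof.
move=> hp; apply/setP => x; rewrite inE; apply/idP/idP.
  by move/(pp_mem hp)/andP=> [].
exact: pp_refl.
Qed.

Lemma pdomU p q : pdom (p :|: q) = pdom p :|: pdom q.
Proof. by apply/setP => x; rewrite !inE. Qed.

Lemma pdom_restr p S : pdom (prestr p S) = pdom p :&: S.
Proof. by apply/setP => x; rewrite !inE andbb. Qed.

Lemma mem_prestr p S x y : ((x, y) \in prestr p S) = [&& (x, y) \in p, x \in S & y \in S].
Proof. by rewrite /prestr in_setI in_setX. Qed.

Lemma prelinP q F : is_osp (pdom q) F ->
  reflect (forall x y, (x, y) \in q -> rr F x y && (((y, x) \notin q) ==> ~~ rr F y x))
          (prelin_ext (osp_rel F) q).
Proof.
rewrite ospE => /andP[oF /eqP gF].
rewrite /prelin_ext -gF osp_total // /=.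
apply: (iffP forallP) => [h x y hxy|h x].
  have := forallP (h x) y; rewrite /ple /plt !mem_osp_rel hxy /= => /andP[a b].
  rewrite a /=; apply/implyP => nyx; move: b; rewrite nyx /= => /andP[_ ->] //.
apply/forallP => y; rewrite /ple /plt !mem_osp_rel.
case hxy: ((x, y) \in q) => //=; have /andP[a b] := h x y hxy.
rewrite a /=; apply/implyP => nyx; by rewrite (implyP b nyx).
Qed.

Lemma prod_comb S U p q H :
  is_preposet S p -> is_preposet U q -> [disjoint S & U] -> is_osp (S :|: U) H ->
  prelin_ext (osp_rel H) (p :|: q) =
  prelin_ext (osp_rel (osp_restr H S)) p && prelin_ext (osp_rel (osp_restr H U)) q.
Proof.
move=> hp hq dSU oH.
have oS := osp_restr_osp S oH; rewrite setUIl_id in oS.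
have oU := osp_restr_osp U oH; rewrite setUIr_id in oU.
have dpq : pdom (p :|: q) = S :|: U by rewrite pdomU (pdom_pp hp) (pdom_pp hq).
have SnU z : z \in S -> z \in U = false.
  by move=> zS; apply/negbTE; apply: (disjointP _ _ dSU).
have memS z w : z \in S -> ((z, w) \in p :|: q) = ((z, w) \in p).
  move=> zS; rewrite in_setU; case: ((z, w) \in q) / idP; rewrite ?orbF // => /(pp_mem hq).
  by rewrite SnU.
have memU z w : z \in U -> ((z, w) \in p :|: q) = ((z, w) \in q).
  move=> zU; rewrite in_setU; case: ((z, w) \in p) / idP => //= /(pp_mem hp)/andP[zS _].
  by rewrite SnU in zU.
rewrite -{1}(pdom_pp hp) in oS; rewrite -{1}(pdom_pp hq) in oU; rewrite -dpq in oH.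
apply/idP/andP => [/(prelinP oH) h|[/(prelinP oS) hS /(prelinP oU) hU]].
  split.
    apply/(prelinP oS) => x y hxy; have /andP[xS yS] := pp_mem hp hxy.
    have := h x y; rewrite in_setU hxy /= => /(_ isT)/andP[a b].
    rewrite !rr_restr xS yS a /=; apply/implyP => nyx.
    by move: b; rewrite memS // (negbTE nyx).
  apply/(prelinP oU) => x y hxy; have /andP[xU yU] := pp_mem hq hxy.
  have := h x y; rewrite in_setU hxy orbT => /(_ isT)/andP[a b].
  rewrite !rr_restr xU yU a /=; apply/implyP => nyx.
  by move: b; rewrite memU // (negbTE nyx).
apply/(prelinP oH) => x y; rewrite in_setU => /orP[hxy|hxy].
  have /andP[xS yS] := pp_mem hp hxy; have /andP[a b] := hS x y hxy.
  move: a b; rewrite !rr_restr xS yS /= => -> b /=; by rewrite memS.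
have /andP[xU yU] := pp_mem hq hxy; have /andP[a b] := hU x y hxy.
move: a b; rewrite !rr_restr xU yU /= => -> b /=; by rewrite memU.
Qed.

End PreComb.
Section CoprodComb.
Variable T : finType.
Implicit Types (F A B H : seq {set T}) (S U I C D : {set T}) (p q : {set T * T}).
Local Open Scope nat_scope.

Lemma coprod_comb S U p A B :
  is_preposet (S :|: U) p -> [disjoint S & U] -> is_osp (S :|: U) (A ++ B) ->
  (osp_ground A == S) && prelin_ext (osp_rel (A ++ B)) p =
  [&& lower_ideal p S, is_osp S A, prelin_ext (osp_rel A) (prestr p S),
      is_osp U B & prelin_ext (osp_rel B) (prestr p U)].
Proof.
move=> hp dSU oAB.
have SnU z : z \in S -> z \in U = false.
  by move=> zS; apply/negbTE; apply: (disjointP _ _ dSU).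
have pS : pdom (prestr p S) = S by rewrite pdom_restr (pdom_pp hp) setUIl_id.
have pU : pdom (prestr p U) = U by rewrite pdom_restr (pdom_pp hp) setUIr_id.
move: (oAB); rewrite ospE ospl_cat ground_cat => /andP[/and3P[oA oB dAB] /eqP gAB].
have AnB z : z \in osp_ground A -> z \in osp_ground B = false.
  by move=> zA; apply/negbTE; apply: (disjointP _ _ dAB).
have oAB' := oAB; rewrite -(pdom_pp hp) in oAB'.
have UnS z : z \in U -> z \in S = false.
  by move=> zU; apply/negP => /SnU; rewrite zU.
have inSU z : z \in S :|: U -> z \in S = false -> z \in U.
  by rewrite in_setU => /orP[->|].
apply/idP/idP.
  case/andP => /eqP gA /(prelinP oAB') h.
  have gB : osp_ground B = U.
    apply/setP => z; apply/idP/idP => zz.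
      have : z \in S :|: U by rewrite -gAB in_setU zz orbT.
      rewrite in_setU; case zS: (z \in S) => //= _.
      by move: zz; rewrite AnB // gA.
    have : z \in osp_ground A :|: osp_ground B by rewrite gAB in_setU zz orbT.
    by rewrite in_setU gA; case zS: (z \in S) => //=; rewrite SnU in zz.
  have oA' : is_osp S A by rewrite ospE oA gA eqxx.
  have oB' : is_osp U B by rewrite ospE oB gB eqxx.
  have rrA x y : rr A x y -> (x \in S) && (y \in S) by move/rr_ground; rewrite gA.
  have rrB x y : rr B x y -> (x \in U) && (y \in U) by move/rr_ground; rewrite gB.
  rewrite oA' oB' /=; apply/and3P; split.
  - apply/forallP => x; apply/forallP => y; apply/implyP => /andP[hxy yS].
    case xS: (x \in S) => //; have /andP[a _] := h x y hxy.
    move: a; rewrite rr_cat gA gB xS /=.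
    case/orP => [/rrA|/rrB]; by rewrite ?xS // (SnU y yS) andbF.
  - have oAs : is_osp (pdom (prestr p S)) A by rewrite pS.
    apply/(prelinP oAs) => x y; rewrite mem_prestr => /and3P[hxy xS yS].
    have /andP[a b] := h x y hxy.
    apply/andP; split.
      move: a; rewrite rr_cat gA gB (SnU y yS) andbF /=.
      by case/orP => // /rrB/andP[]; rewrite SnU.
    apply/implyP => n; have n' : (y, x) \notin p by move: n; rewrite mem_prestr yS xS !andbT.
    by move: (implyP b n'); rewrite rr_cat negb_or => /andP[].
  - have oBs : is_osp (pdom (prestr p U)) B by rewrite pU.
    apply/(prelinP oBs) => x y; rewrite mem_prestr => /and3P[hxy xU yU].
    have /andP[a b] := h x y hxy.
    apply/andP; split.
      move: a; rewrite rr_cat gA gB (UnS x xU) /=.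
      by case/orP => // /rrA/andP[]; rewrite UnS.
    apply/implyP => n; have n' : (y, x) \notin p by move: n; rewrite mem_prestr yU xU !andbT.
    by move: (implyP b n'); rewrite rr_cat !negb_or => /and3P[].
case/and5P => li oA' hA oB' hB.
have gA : osp_ground A = S by move: oA'; rewrite ospE => /andP[_ /eqP].
have gB : osp_ground B = U by move: oB'; rewrite ospE => /andP[_ /eqP].
have rrA x y : rr A x y -> (x \in S) && (y \in S) by move/rr_ground; rewrite gA.
have rrB x y : rr B x y -> (x \in U) && (y \in U) by move/rr_ground; rewrite gB.
have oAs : is_osp (pdom (prestr p S)) A by rewrite pS.
have oBs : is_osp (pdom (prestr p U)) B by rewrite pU.
have hA' := elimT (prelinP oAs) hA; have hB' := elimT (prelinP oBs) hB.
rewrite gA eqxx /=; apply/(prelinP oAB') => x y hxy.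
have /andP[xI yI] := pp_mem hp hxy; rewrite !rr_cat gA gB.
have li' : y \in S -> x \in S.
  by move=> yS; move: li => /forallP/(_ x)/forallP/(_ y)/implyP; apply; rewrite /ple hxy yS.
case xS: (x \in S); case yS: (y \in S).
- have hxyS : (x, y) \in prestr p S by rewrite mem_prestr hxy xS yS.
  have /andP[a b] := hA' x y hxyS.
  rewrite a /=; apply/implyP => n.
  have n' : (y, x) \notin prestr p S by rewrite mem_prestr (negbTE n).
  rewrite negb_or (implyP b n') /= (SnU x xS) /=.
  by apply/negP => /rrB/andP[yU _]; rewrite SnU in yU.
- have yU := inSU y yI yS.
  rewrite yU orbT /=; apply/implyP => _.
  rewrite negb_or; apply/andP; split.
    by apply/negP => /rrA/andP[]; rewrite yS.
  by apply/negP => /rrB/andP[]; rewrite (SnU x xS).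
- by rewrite (li' yS) in xS.
- have xU := inSU x xI xS; have yU := inSU y yI yS.
  have hxyU : (x, y) \in prestr p U by rewrite mem_prestr hxy xU yU.
  have /andP[a b] := hB' x y hxyU.
  rewrite a !orbT /=; apply/implyP => n.
  have n' : (y, x) \notin prestr p U by rewrite mem_prestr (negbTE n).
  rewrite /= negb_or (implyP b n') andbT.
  by apply/negP => /rrA/andP[]; rewrite yS.
Qed.

End CoprodComb.
Lemma inspan_osp_sum (k : fieldType) (A : choiceType) (T : finType) (Q : A -> bool) I
   (P : pred (seq {set T})) (g : seq {set T} -> {malg k[A]}) :
  (forall F, is_osp I F -> P F -> inspan Q (g F)) -> inspan Q (osp_sum I P g).
Proof.
move=> h; apply: inspan_sum => n _; apply: inspan_sum => t /andP[o p]; exact: h.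
Qed.

Lemma tens_osp_sum (k : fieldType) (A B : choiceType) (T : finType) I J
   (P Q : pred (seq {set T})) (f : seq {set T} -> A) (g : seq {set T} -> B) :
  tens (osp_sum I P (fun F => (<< f F >> : {malg k[A]}))) (osp_sum J Q (fun G => (<< g G >> : {malg k[B]}))) =
  osp_sum I P (fun F => osp_sum J Q (fun G => << (f F, g G) >>)).
Proof.
rewrite (lin_osp_sum _ _ _ (tens_linl _)); apply: osp_sum_eq => F _ _.
rewrite (lin_osp_sum _ _ _ (tens_linr _)); apply: osp_sum_eq => G _ _.
by rewrite tensUU.
Qed.

Lemma osp0 (T : finType) (F : seq {set T}) : is_osp set0 F -> F = [::].
Proof.
case: F => [//|B F]; rewrite ospE ospl_cons => /andP[/and3P[ne _ _] /eqP g].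
exfalso; move: ne; rewrite ground_cons in g; apply/negP; rewrite negbK eqEsubset sub0set andbT -g.
exact: subsetUl.
Qed.

Lemma osp_nil (T : finType) : is_osp (set0 : {set T}) [::].
Proof. by rewrite ospE ground_nil eqxx. Qed.

Lemma osp_sum0 (T : finType) (V : zmodType) (P : pred (seq {set T})) (g : seq {set T} -> V) :
  osp_sum set0 P g = if P [::] then g [::] else 0.
Proof.
rewrite (osp_sum_eq (g := fun F => if F == [::] then g F else 0)); last by move=> F /osp0 ->.
by rewrite osp_sum_ind osp_nil.
Qed.

Section Unweighted.
Variables (T : finType) (k : fieldType).

Local Notation st := (@st_PP T k).

Lemma stU p : st << p >> = st_PP_basis k p.
Proof. by rewrite /st_PP linextU. Qed.

Lemma st_lin : lin st.
Proof. exact: linext_lin. Qed.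

Lemma st_span I x : inspan (@PP_in T I) x -> inspan (@Sig_in T I) (st x).
Proof.
move=> hx; rewrite /st_PP; apply: (inspan_linext hx) => p hp.
rewrite /st_PP_basis (pdom_pp hp); apply: inspan_osp_sum => F oF _.
by apply: inspanU.
Qed.

Lemma st_unit : st << PP_one T >> = << Sig_one T >>.
Proof.
rewrite stU /st_PP_basis /PP_one.
have -> : pdom (set0 : {set T * T}) = set0 by apply/setP => x; rewrite !inE.
rewrite osp_sum0; case: ifP => // /negP; case.
apply/prelinP; first by rewrite (_ : pdom set0 = set0) ?osp_nil //; apply/setP => x; rewrite !inE.
by move=> x y; rewrite in_set0.
Qed.

Lemma pp0 (p : {set T * T}) : is_preposet set0 p -> p = set0.
Proof.
move=> hp; apply/setP => -[x y]; rewrite in_set0; apply/negP => /(pp_mem hp).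
by rewrite in_set0.
Qed.

Lemma st_counit x : inspan (@PP_in T set0) x -> mcoeff (Sig_one T) (st x) = mcoeff (PP_one T) x.
Proof.
move=> hx.
apply: (@lin_span k _ k^o (@PP_in T set0) (fun x => (mcoeff (Sig_one T) (st x) : k^o)) (fun x => (mcoeff (PP_one T) x : k^o))) => //.
- by move=> c y z; rewrite st_lin mcoeffD mcoeffZ.
- by move=> c y z; rewrite mcoeffD mcoeffZ.
move=> a /pp0 ->; rewrite -/(PP_one T) st_unit !mcoeffUU //.
Qed.

End Unweighted.
Section Unweighted2.
Variables (T : finType) (k : fieldType).
Local Notation st := (@st_PP T k).

Lemma st_basis_osp (I : {set T}) (p : {set T * T}) : is_preposet I p ->
  st_PP_basis k p = osp_sum I (fun F => prelin_ext (osp_rel F) p) (fun F => (<< F >> : {malg k[seq {set T}]})).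
Proof. by move=> hp; rewrite /st_PP_basis (pdom_pp hp). Qed.

Lemma ground_osp I (F : seq {set T}) : is_osp I F -> osp_ground F = I.
Proof. by rewrite ospE => /andP[_ /eqP]. Qed.

Lemma pp_union (S U : {set T}) (p q : {set T * T}) : is_preposet S p -> is_preposet U q -> [disjoint S & U] ->
  is_preposet (S :|: U) (p :|: q).
Proof.
move=> hp hq dSU; apply/and3P; split.
- apply/subsetP => -[x y]; rewrite in_setU in_setX => /orP[/(pp_mem hp)|/(pp_mem hq)] /andP[a b];
  by rewrite !in_setU a b ?orbT.
- apply/forall_inP => x; rewrite in_setU in_setU => /orP[/(pp_refl hp) -> //|/(pp_refl hq) ->];
  by rewrite orbT.
- apply/forallP => x; apply/forallP => y; apply/forallP => z; apply/implyP.
  rewrite !in_setU => /andP[/orP[h1|h1] /orP[h2|h2]].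
  + by rewrite (pp_trans hp h1 h2).
  + have /andP[_ yS] := pp_mem hp h1; have /andP[yU _] := pp_mem hq h2.
    by move: (disjointP _ _ dSU y yS); rewrite yU.
  + have /andP[_ yU] := pp_mem hq h1; have /andP[yS _] := pp_mem hp h2.
    by move: (disjointP _ _ dSU y yS); rewrite yU.
  + by rewrite (pp_trans hq h1 h2) orbT.
Qed.

Lemma pp_restr (I : {set T}) (p : {set T * T}) S : is_preposet I p -> is_preposet (I :&: S) (prestr p S).
Proof.
move=> hp; apply/and3P; split.
- apply/subsetP => -[x y]; rewrite mem_prestr => /and3P[/(pp_mem hp)/andP[a b] c d].
  by rewrite in_setX !in_setI a b c d.
- apply/forall_inP => x; rewrite in_setI => /andP[xI xS]; by rewrite mem_prestr (pp_refl hp xI) xS.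
- apply/forallP => x; apply/forallP => y; apply/forallP => z; apply/implyP.
  rewrite !mem_prestr => /andP[/and3P[h1 -> _] /and3P[h2 _ ->]].
  by rewrite (pp_trans hp h1 h2).
Qed.

Lemma st_prod (S U : {set T}) (x : {malg k[({set T * T} * {set T * T})%type]}) : [disjoint S & U] ->
  inspan (fun ab => @PP_in T S ab.1 && @PP_in T U ab.2) x ->
  st (linext (@PP_mul T k) x) = linext (@Sig_mul T k) (tensmap st st x).
Proof.
move=> dSU; apply: (@lin_span k _ _ _ (fun x => st (linext (@PP_mul T k) x))
   (fun x => linext (@Sig_mul T k) (tensmap st st x))).
- by move=> c y z; rewrite linext_lin st_lin.
- by move=> c y z; rewrite /tensmap !linext_lin.
move=> [p q] /andP[/= hp hq].
rewrite linextU /PP_mul /= stU tensmapU !stU (st_basis_osp (pp_union hp hq dSU)).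
rewrite (st_basis_osp hp) (st_basis_osp hq) tens_osp_sum.
rewrite (@lin_osp_sum k _ _ T (linext (@Sig_mul T k)) _ _ _ (linext_lin _)).
rewrite [RHS](osp_sum_eq (g := fun F => osp_sum U (fun G => prelin_ext (osp_rel G) q) (fun G =>
     osp_sum (S :|: U) (fun H => (osp_restr H S == F) && (osp_restr H U == G)) (fun H => << H >>)))); last first.
  move=> F oF _; rewrite (@lin_osp_sum k _ _ T (linext (@Sig_mul T k)) _ _ _ (linext_lin _)); apply: osp_sum_eq => G oG _.
  by rewrite linextU /Sig_mul /= (ground_osp oF) (ground_osp oG).
rewrite (prod_sum (Pp := fun H => prelin_ext (osp_rel H) (p :|: q))) //; move=> H oH; exact: prod_comb.
Qed.

Lemma st_coprod (S U : {set T}) (x : {malg k[{set T * T}]}) : [disjoint S & U] ->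
  inspan (@PP_in T (S :|: U)) x ->
  tensmap st st (linext (@PP_comul T k S U) x) = linext (@Sig_comul T k S U) (st x).
Proof.
move=> dSU; apply: (@lin_span k _ _ _ (fun x => tensmap st st (linext (@PP_comul T k S U) x))
   (fun x => linext (@Sig_comul T k S U) (st x))).
- by move=> c y z; rewrite /tensmap !linext_lin.
- by move=> c y z; rewrite st_lin linext_lin.
move=> p hp; rewrite linextU stU (st_basis_osp hp) (lin_osp_sum _ _ _ (linext_lin _)).
under osp_sum_eq => F _ _ do rewrite linextU /Sig_comul.
rewrite (@coprod_sum T _ S U (fun F => prelin_ext (osp_rel F) (prestr p S))
   (fun F => prelin_ext (osp_rel F) (prestr p U)) (fun F => prelin_ext (osp_rel F) p) (lower_ideal p S)
   (fun F1 F2 => (<< (F1, F2) >> : {malg k[(seq {set T} * seq {set T})%type]}))) //; last first.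
  move=> F j oF jF /=; have := @coprod_comb T S U p (take j F) (drop j F) hp dSU.
  by rewrite cat_take_drop => ->.
rewrite /PP_comul; case: ifP => li; last by rewrite /tensmap (lin0 (linext_lin _)).
rewrite tensmapU !stU.
have hS := pp_restr S hp; rewrite setUIl_id in hS.
have hU := pp_restr U hp; rewrite setUIr_id in hU.
by rewrite (st_basis_osp hS) (st_basis_osp hU) tens_osp_sum.
Qed.

End Unweighted2.
Section Relab.
Variables (T : finType) (s : {perm T}).
Implicit Types (F A B H : seq {set T}) (S U I C D : {set T}) (p q : {set T * T}).
Local Notation m := (@Sig_relabel T s).

Lemma sinj : injective (s : T -> T).
Proof. exact: perm_inj. Qed.

Lemma imsetK_perm C : (s^-1)%g @: ((s : T -> T) @: C) = C.
Proof.
rewrite -imset_comp (eq_imset _ (permK s)); apply/setP => x.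
by apply/imsetP/idP => [[y yC ->]|xC] //; exists x.
Qed.

Lemma imsetKV_perm C : (s : T -> T) @: ((s^-1)%g @: C) = C.
Proof.
rewrite -imset_comp (eq_imset _ (permKV s)); apply/setP => x.
by apply/imsetP/idP => [[y yC ->]|xC] //; exists x.
Qed.

Lemma ground_m F : osp_ground (m F) = (s : T -> T) @: osp_ground F.
Proof.
elim: F => [|C F IH]; first by rewrite /= !ground_nil imset0.
by rewrite /= !ground_cons imsetU -IH.
Qed.

Lemma rr_m F x y : rr (m F) (s x) (s y) = rr F x y.
Proof.
elim: F => [//|C F IH] /=.
by rewrite -/(m F) IH ground_m !mem_imset //; exact: sinj.
Qed.

Lemma ospl_m F : ospl (m F) = ospl F.
Proof.
elim: F => [//|C F IH].
by rewrite [m _]/= !ospl_cons -/(m F) IH ground_m imset_eq0 imset_disjoint //; exact: sinj.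
Qed.

Lemma osp_m I F : is_osp ((s : T -> T) @: I) (m F) = is_osp I F.
Proof.
rewrite !ospE ospl_m ground_m; congr (_ && _).
apply/eqP/eqP => [e|->//]; by rewrite -(imsetK_perm (osp_ground F)) e imsetK_perm.
Qed.

Lemma mem_rel p x y : ((s x, s y) \in PP_relabel s p) = ((x, y) \in p).
Proof.
rewrite /PP_relabel (mem_imset (f := fun xy : T * T => (s xy.1, s xy.2)) _ (x, y)) //.
by move=> [a b] [c d] /= [] /sinj -> /sinj ->.
Qed.

Lemma pdom_rel p : pdom (PP_relabel s p) = (s : T -> T) @: pdom p.
Proof.
apply/setP => z; rewrite -[z](permKV s) mem_imset; last exact: sinj.
by rewrite !inE mem_rel.
Qed.

Lemma prelin_m p F : is_osp (pdom p) F ->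
  prelin_ext (osp_rel (m F)) (PP_relabel s p) = prelin_ext (osp_rel F) p.
Proof.
move=> oF; have oF' : is_osp (pdom (PP_relabel s p)) (m F) by rewrite pdom_rel osp_m.
apply/(prelinP oF')/(prelinP oF) => h x y.
  by move=> hxy; have := h (s x) (s y); rewrite mem_rel !rr_m mem_rel => /(_ hxy).
rewrite -[x](permKV s) -[y](permKV s) mem_rel !rr_m mem_rel; exact: h.
Qed.

Lemma osp_sum_relabel (V : zmodType) I P Q (f : seq {set T} -> V) :
  (forall F, is_osp I F -> P (m F) = Q F) ->
  osp_sum ((s : T -> T) @: I) P f = osp_sum I Q (fun F => f (m F)).
Proof.
move=> hPQ; apply: eq_bigr => n _.
pose h := fun t : n.-tuple {set T} => map_tuple (fun B : {set T} => (s : T -> T) @: B) t.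
pose hi := fun t : n.-tuple {set T} => map_tuple (fun B : {set T} => (s^-1)%g @: B) t.
have hb : bijective h.
  exists hi => t; apply: val_inj; rewrite /= -map_comp -[RHS]map_id; apply: eq_map => C /=.
    exact: imsetK_perm.
  exact: imsetKV_perm.
rewrite (reindex h); last exact: onW_bij.
apply: eq_big => t; first by rewrite /= -/(m t) osp_m; case o: (is_osp I t); rewrite //= hPQ.
by [].
Qed.

End Relab.
Section UnwMain.
Variables (T : finType) (k : fieldType).
Local Notation st := (@st_PP T k).

Lemma st_relabel (s : {perm T}) x :
  st (linext (fun a => << PP_relabel s a >>) x) = linext (fun b => << Sig_relabel s b >>) (st x).
Proof.
apply: (@lin_span k _ _ xpredT (fun x => st (linext (fun a => << PP_relabel s a >>) x))
   (fun x => linext (fun b => << Sig_relabel s b >>) (st x))) => //.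
- by move=> c y z; rewrite linext_lin st_lin.
- by move=> c y z; rewrite st_lin linext_lin.
move=> p _; rewrite linextU !stU /st_PP_basis pdom_rel.
rewrite (osp_sum_relabel (Q := fun F => prelin_ext (osp_rel F) p)); last exact: prelin_m.
rewrite (@lin_osp_sum k _ _ T (linext (fun b => << Sig_relabel s b >>)) _ _ _ (linext_lin _)).
by apply: osp_sum_eq => F _ _; rewrite linextU.
Qed.

Lemma st_hopf :
  hopf_monoid_morphism (@PP_in T) (@Sig_in T) (@PP_relabel T) (@Sig_relabel T)
    (@PP_mul T k) (@Sig_mul T k) (@PP_comul T k) (@Sig_comul T k)
    (PP_one T) (Sig_one T) (@st_PP T k).
Proof.
split; first exact: st_lin.
split; first exact: st_span.
split; first exact: st_relabel.
split; first exact: st_unit.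
split; first exact: st_counit.
split; first exact: st_prod.
exact: st_coprod.
Qed.

End UnwMain.
Section WComb.
Variables (T : finType) (R : realType).
Implicit Types (F A B H : seq {set T}) (S U I C D L X Q : {set T}) (p q : {set T * T}).

Definition wsum p (w : {ffun {set T} -> R}) L : R :=
  \sum_(Q : {set T} | is_class p Q && (Q \subset L)) w Q.
Definition wmap p (w : {ffun {set T} -> R}) F : seq ({set T} * R) :=
  map (fun L => (L, wsum p w L)) F.

Lemma map_fst_wmap p w F : map fst (wmap p w F) = F.
Proof. by rewrite /wmap -map_comp map_id_in. Qed.

Lemma pclass_refl I p x : is_preposet I p -> x \in pdom p -> x \in pclass p x.
Proof. by move=> _; rewrite !inE andbb. Qed.

Lemma class_ne p Q : is_class p Q -> Q != set0.
Proof.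
case/existsP => x /andP[xd /eqP ->]; apply/set0Pn; exists x.
by move: xd; rewrite !inE andbb.
Qed.

Lemma class_sub I p Q : is_preposet I p -> is_class p Q -> Q \subset I.
Proof.
move=> hp /existsP[x /andP[_ /eqP ->]]; apply/subsetP => y; rewrite inE => /andP[h _].
by have /andP[] := pp_mem hp h.
Qed.

Lemma wsum0 p w : wsum p w set0 = 0.
Proof.
apply: big1 => Q /andP[/class_ne ne sub]; exfalso; move: ne.
by rewrite subset0 in sub; rewrite sub.
Qed.

Lemma sum_filter_irr (P1 P2 : pred {set T}) (w : {ffun {set T} -> R}) :
  (forall Q, w Q != 0 -> P1 Q = P2 Q) -> \sum_(Q | P1 Q) w Q = \sum_(Q | P2 Q) w Q.
Proof.
move=> h; rewrite big_mkcond [RHS]big_mkcond; apply: eq_bigr => Q _.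
by case: (w Q =P 0) => [->|/eqP/h ->]; rewrite ?if_same.
Qed.

Lemma wvanish I p (w : {ffun {set T} -> R}) : wPP_in I (p, w) -> forall Q, w Q != 0 -> is_class p Q.
Proof.
case/andP => _ /forallP h Q; apply: contraR => nc; by rewrite (implyP (h Q) nc).
Qed.

Lemma class_union S U p q Q : is_preposet S p -> is_preposet U q -> [disjoint S & U] ->
  is_class p Q -> is_class (p :|: q) Q.
Proof.
move=> hp hq dSU /existsP[x /andP[xd /eqP ->]].
have xS : x \in S by rewrite -(pdom_pp hp).
have xU : x \in U = false by apply/negbTE; apply: (disjointP _ _ dSU).
apply/existsP; exists x; rewrite pdomU in_setU xd /=; apply/eqP/setP => y; rewrite !inE.
case: ((x, y) \in q) / idP => [/(pp_mem hq)/andP[]|]; first by rewrite xU.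
case: ((y, x) \in q) / idP => [/(pp_mem hq)/andP[_]|]; first by rewrite xU.
by rewrite !orbF.
Qed.

Lemma wsum_union S U p q (u v : {ffun {set T} -> R}) L :
  wPP_in S (p, u) -> wPP_in U (q, v) -> [disjoint S & U] ->
  wsum (p :|: q) [ffun Q => u Q + v Q] L = wsum p u (L :&: S) + wsum q v (L :&: U).
Proof.
move=> hu hv dSU; have hp : is_preposet S p := (andP hu).1; have hq : is_preposet U q := (andP hv).1.
rewrite /wsum; under eq_bigr => Q _ do rewrite ffunE; rewrite big_split /=.
congr (_ + _); apply: sum_filter_irr => Q nz; [have c := wvanish hu nz|have c := wvanish hv nz].
  rewrite c (class_union hp hq dSU c) /=.
  by rewrite subsetI (class_sub hp c) andbT.
rewrite c.
have dUS : [disjoint U & S] by rewrite disjoint_sym.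
rewrite setUC (class_union hq hp dUS c) /=.
by rewrite subsetI (class_sub hq c) andbT.
Qed.

Lemma ospl_uniq F : ospl F -> uniq F.
Proof.
elim: F => [//|C F IH]; rewrite ospl_cons => /and3P[ne dC oF] /=; rewrite IH // andbT.
apply/negP => CF; case/set0Pn: ne => x xC.
have : x \in osp_ground F by rewrite mem_ground; apply/hasP; exists C.
by rewrite (negbTE (disjointP _ _ dC x xC)).
Qed.

Lemma sum_pred1_uniq (V : zmodType) (F : seq {set T}) X (g : {set T} -> V) :
  uniq F -> \sum_(L <- F | L == X) g L = if X \in F then g X else 0.
Proof.
elim: F => [|C F IH]; first by rewrite big_nil.
rewrite /= big_cons in_cons => /andP[nC uF]; rewrite IH //.
have [e|ne] := eqVneq C X.
  by subst C; rewrite /= (negbTE nC) addr0.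
by [].
Qed.

Lemma wlookup_wmap p w F X : ospl F ->
  wlookup (wmap p w F) X = if X \in F then wsum p w X else 0.
Proof.
move=> oF; rewrite /wlookup /wmap big_map /=.
by rewrite sum_pred1_uniq //; exact: ospl_uniq.
Qed.

Lemma mem_restr F S C : C \in F -> C :&: S != set0 -> C :&: S \in osp_restr F S.
Proof. by move=> CF ne; rewrite /osp_restr mem_filter ne /=; apply: (map_f (fun B : {set T} => B :&: S)). Qed.

Lemma wlookup_restr p w H S C : ospl H -> C \in H ->
  wlookup (wmap p w (osp_restr H S)) (C :&: S) = wsum p w (C :&: S).
Proof.
move=> oH CH; rewrite wlookup_wmap; last exact: ospl_restr.
case: ifP => // nin; case: (C :&: S =P set0) => [->|/eqP ne]; first by rewrite wsum0.
by rewrite (mem_restr CH ne) in nin.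
Qed.

Lemma pclass_restr p X x : x \in X -> pclass (prestr p X) x = pclass p x :&: X.
Proof.
move=> xX; apply/setP => y; rewrite /pclass in_setI !in_set /= xX.
by case: (y \in X); case: ((x, y) \in p); case: ((y, x) \in p).
Qed.

Lemma class_restr p X Q : (forall x, x \in X -> pclass p x \subset X) -> Q \subset X ->
  is_class (prestr p X) Q = is_class p Q.
Proof.
move=> cl QX; apply/existsP/existsP => -[x /andP[xd /eqP e]]; exists x.
  move: xd; rewrite pdom_restr in_setI => /andP[xd xX].
  by rewrite xd e pclass_restr // (setIidPl (cl x xX)) eqxx.
have xQ : x \in Q by rewrite e !inE; move: xd; rewrite !inE andbb.
have xX : x \in X by apply: (subsetP QX).
by rewrite pdom_restr in_setI xd xX pclass_restr // (setIidPl (cl x xX)) e eqxx.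
Qed.

Lemma wsum_restr p (w : {ffun {set T} -> R}) X L :
  (forall x, x \in X -> pclass p x \subset X) -> L \subset X ->
  wsum (prestr p X) (wrestr w X) L = wsum p w L.
Proof.
move=> cl LX; rewrite /wsum; apply: eq_big => Q.
  case QL: (Q \subset L); rewrite ?andbF ?andbT //.
  by rewrite class_restr //; apply: subset_trans LX.
move=> /andP[_ QL]; by rewrite ffunE (subset_trans QL LX).
Qed.

End WComb.
Section WMain.
Variables (T : finType) (k : fieldType) (R : realType).
Local Notation stw := (@st_wPP T k R).
Local Notation wPPb := ({set T * T} * {ffun {set T} -> R})%type.
Local Notation wSb := (seq ({set T} * R)).

Lemma stwU (p : {set T * T}) (w : {ffun {set T} -> R}) :
  stw (<< (p, w) >> : {malg k[wPPb]}) =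
  osp_sum (pdom p) (fun F => prelin_ext (osp_rel F) p) (fun F => (<< wmap p w F >> : {malg k[wSb]})).
Proof. by rewrite /st_wPP linextU. Qed.

Lemma stw_lin : lin stw.
Proof. exact: linext_lin. Qed.

Lemma stw_span I x : inspan (@wPP_in T R I) x -> inspan (@wSig_in T R I) (stw x).
Proof.
move=> hx; rewrite /st_wPP; apply: (inspan_linext hx) => -[p w] /andP[hp _].
have := stwU p w; rewrite /st_wPP linextU => ->; rewrite (pdom_pp hp); apply: inspan_osp_sum => F oF _.
by apply: inspanU; rewrite /wSig_in map_fst_wmap.
Qed.

Lemma pclass_rel (s : {perm T}) (p : {set T * T}) (x : T) : pclass (PP_relabel s p) (s x) = (s : T -> T) @: pclass p x.
Proof.
apply/setP => z; rewrite -[z](permKV s) mem_imset; last exact: sinj.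
by rewrite !inE !mem_rel.
Qed.

Lemma class_rel (s : {perm T}) (p : {set T * T}) (Q : {set T}) : is_class (PP_relabel s p) ((s : T -> T) @: Q) = is_class p Q.
Proof.
apply/existsP/existsP => -[x /andP[xd /eqP e]].
  have [y ey] : exists y, x = s y by exists ((s^-1)%g x); rewrite permKV.
  subst x; exists y; move: xd e; rewrite pdom_rel mem_imset; last exact: sinj.
  by rewrite pclass_rel => -> /(imset_inj (@sinj T s)) ->; rewrite eqxx.
exists (s x); by rewrite pdom_rel mem_imset ?xd ?pclass_rel ?e ?eqxx //; exact: sinj.
Qed.

Lemma wsum_rel (s : {perm T}) (p : {set T * T}) (w : {ffun {set T} -> R}) (L : {set T}) :
  wsum (PP_relabel s p) [ffun Q : {set T} => w ((s^-1)%g @: Q)] ((s : T -> T) @: L) = wsum p w L.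
Proof.
rewrite /wsum (reindex (fun Q : {set T} => (s : T -> T) @: Q)); last first.
  have hb : bijective (fun Q : {set T} => (s : T -> T) @: Q).
    by exists (fun Q : {set T} => (s^-1)%g @: Q) => Q; [exact: imsetK_perm|exact: imsetKV_perm].
  exact: onW_bij.
apply: eq_big => Q; last by move=> _; rewrite ffunE imsetK_perm.
rewrite class_rel; congr (_ && _); apply/idP/idP => h; last exact: imsetS.
by rewrite -(imsetK_perm s Q) -(imsetK_perm s L); exact: imsetS.
Qed.

Lemma stw_relabel (s : {perm T}) x :
  stw (linext (fun a => << wPP_relabel s a >>) x) = linext (fun b => << wSig_relabel s b >>) (stw x).
Proof.
apply: (@lin_span k _ _ xpredT (fun x => stw (linext (fun a => << wPP_relabel s a >>) x))
   (fun x => linext (fun b => << wSig_relabel s b >>) (stw x))) => //.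
- by move=> c y z; rewrite linext_lin stw_lin.
- by move=> c y z; rewrite stw_lin linext_lin.
move=> [p w] _; rewrite linextU /wPP_relabel /= !stwU pdom_rel.
rewrite (osp_sum_relabel (Q := fun F => prelin_ext (osp_rel F) p)); last exact: prelin_m.
rewrite (@lin_osp_sum k _ _ T (linext (fun b => << wSig_relabel s b >>)) _ _ _ (linext_lin _)).
apply: osp_sum_eq => F _ _; rewrite linextU; congr (<< _ >>).
rewrite /wmap /wSig_relabel /Sig_relabel -!map_comp; apply: eq_map => L /=.
by rewrite wsum_rel.
Qed.

Lemma stw_unit : stw << wPP_one T R >> = << wSig_one T R >>.
Proof.
rewrite /wPP_one stwU.
have -> : pdom (set0 : {set T * T}) = set0 by apply/setP => x; rewrite !inE.
rewrite osp_sum0; case: ifP => // /negP; case.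
apply/prelinP; first by rewrite (_ : pdom set0 = set0) ?osp_nil //; apply/setP => x; rewrite !inE.
by move=> x y; rewrite in_set0.
Qed.

Lemma stw_counit x : inspan (@wPP_in T R set0) x -> mcoeff (wSig_one T R) (stw x) = mcoeff (wPP_one T R) x.
Proof.
move=> hx.
apply: (@lin_span k _ k^o (@wPP_in T R set0) (fun x => (mcoeff (wSig_one T R) (stw x) : k^o))
   (fun x => (mcoeff (wPP_one T R) x : k^o))) => //.
- by move=> c y z; rewrite stw_lin mcoeffD mcoeffZ.
- by move=> c y z; rewrite mcoeffD mcoeffZ.
move=> [p w] /andP[/= /pp0 e /forallP hw]; subst p.
have -> : w = [ffun => 0].
  apply/ffunP => Q; rewrite ffunE; apply/eqP; apply: (implyP (hw Q)).
  apply/negP => /existsP[z /andP[]]; by rewrite !inE.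
by rewrite -/(wPP_one T R) stw_unit !mcoeffUU.
Qed.

End WMain.

Section WMain2.
Variables (T : finType) (k : fieldType) (R : realType).
Local Notation stw := (@st_wPP T k R).
Local Notation wPPb := ({set T * T} * {ffun {set T} -> R})%type.
Local Notation wSb := (seq ({set T} * R)).

Lemma mem_sub_ground (L : {set T}) F : L \in F -> L \subset osp_ground F.
Proof.
move=> LF; apply/subsetP => x xL; rewrite mem_ground; apply/hasP; by exists L.
Qed.

Lemma stwbE (p : {set T * T}) (w : {ffun {set T} -> R}) :
  st_wPP_basis k (p, w) =
  osp_sum (pdom p) (fun F => prelin_ext (osp_rel F) p) (fun F => (<< wmap p w F >> : {malg k[wSb]})).
Proof. by []. Qed.

Lemma stw_prod_basis (S U : {set T}) (p q : {set T * T}) (u v : {ffun {set T} -> R}) :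
  [disjoint S & U] -> wPP_in S (p, u) -> wPP_in U (q, v) ->
  stw (linext (@wPP_mul T k R) << ((p, u), (q, v)) >>) = linext (@wSig_mul T k R) (tensmap stw stw << ((p, u), (q, v)) >>).
Proof.
move=> dSU hu hv.
have hp : is_preposet S p := (andP hu).1; have hq : is_preposet U q := (andP hv).1.
rewrite [in LHS]linextU /wPP_mul /= tensmapU /st_wPP [in LHS]linextU.
rewrite [X in tens X _]linextU [X in tens _ X]linextU !stwbE (pdom_pp (pp_union hp hq dSU)).
rewrite (pdom_pp hp) (pdom_pp hq) tens_osp_sum.
rewrite (@lin_osp_sum k _ _ T (linext (@wSig_mul T k R)) _ _ _ (linext_lin _)).
rewrite [RHS](osp_sum_eq (g := fun F => osp_sum U (fun G => prelin_ext (osp_rel G) q) (fun G =>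
     osp_sum (S :|: U) (fun H => (osp_restr H S == F) && (osp_restr H U == G))
       (fun H => (<< wmap (p :|: q) [ffun Q => u Q + v Q] H >> : {malg k[wSb]}))))); last first.
  move=> F oF _; rewrite (@lin_osp_sum k _ _ T (linext (@wSig_mul T k R)) _ _ _ (linext_lin _)).
  apply: osp_sum_eq => G oG _.
  rewrite [in LHS]linextU /wSig_mul /= !map_fst_wmap (ground_osp oF) (ground_osp oG).
  apply: osp_sum_eq => H oH /andP[/eqP eF /eqP eG]; congr (<< _ >>).
  have oHl : ospl H by move: oH; rewrite ospE => /andP[].
  rewrite -eF -eG [in RHS]/wmap; apply/eq_in_map => B BH /=.
  by rewrite !wlookup_restr // -wsum_union.
rewrite (prod_sum (Pp := fun H => prelin_ext (osp_rel H) (p :|: q))) //; move=> H oH; exact: prod_comb.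
Qed.

Lemma stw_prod (S U : {set T}) (x : {malg k[(wPPb * wPPb)%type]}) : [disjoint S & U] ->
  inspan (fun ab => @wPP_in T R S ab.1 && @wPP_in T R U ab.2) x ->
  stw (linext (@wPP_mul T k R) x) = linext (@wSig_mul T k R) (tensmap stw stw x).
Proof.
move=> dSU; apply: (@lin_span k _ _ _ (fun x => stw (linext (@wPP_mul T k R) x))
   (fun x => linext (@wSig_mul T k R) (tensmap stw stw x))).
- by move=> c y z; rewrite linext_lin stw_lin.
- by move=> c y z; rewrite /tensmap !linext_lin.
move=> [[p u] [q v]] /andP[/= hu hv].
exact: (stw_prod_basis dSU hu hv).
Qed.

Lemma size_wmap (p : {set T * T}) (w : {ffun {set T} -> R}) (F : seq {set T}) : size (wmap (R:=R) p w F) = size F.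
Proof. exact: size_map. Qed.
Lemma take_wmap (p : {set T * T}) (w : {ffun {set T} -> R}) (F : seq {set T}) (j : nat) : take j (wmap (R:=R) p w F) = wmap p w (take j F).
Proof. by rewrite /wmap map_take. Qed.
Lemma drop_wmap (p : {set T * T}) (w : {ffun {set T} -> R}) (F : seq {set T}) (j : nat) : drop j (wmap (R:=R) p w F) = wmap p w (drop j F).
Proof. by rewrite /wmap map_drop. Qed.

Lemma stw_coprod_basis (S U : {set T}) (p : {set T * T}) (w : {ffun {set T} -> R}) :
  [disjoint S & U] -> wPP_in (S :|: U) (p, w) ->
  tensmap stw stw (linext (@wPP_comul T k R S U) << (p, w) >>) = linext (@wSig_comul T k R S U) (stw << (p, w) >>).
Proof.
move=> dSU hpw; have hp : is_preposet (S :|: U) p := (andP hpw).1.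
rewrite [in RHS]/st_wPP [linext (@st_wPP_basis T k R) _]linextU stwbE (pdom_pp hp).
rewrite (@lin_osp_sum k _ _ T (linext (@wSig_comul T k R S U)) _ _ _ (linext_lin _)).
under osp_sum_eq => F _ _ do rewrite linextU /wSig_comul map_fst_wmap size_wmap.
under osp_sum_eq => F _ _ do under eq_bigr => j _ do rewrite take_wmap drop_wmap.
rewrite (@coprod_sum T _ S U (fun F => prelin_ext (osp_rel F) (prestr p S))
   (fun F => prelin_ext (osp_rel F) (prestr p U)) (fun F => prelin_ext (osp_rel F) p) (lower_ideal p S)
   (fun F1 F2 => (<< (wmap p w F1, wmap p w F2) >> : {malg k[(wSb * wSb)%type]}))) //; last first.
  move=> F j oF jF /=; have := @coprod_comb T S U p (take j F) (drop j F) hp dSU.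
  by rewrite cat_take_drop => ->.
rewrite [in LHS]linextU /wPP_comul /=; case: ifP => li; last by rewrite /tensmap (lin0 (linext_lin _)).
rewrite tensmapU /st_wPP [X in tens X _]linextU [X in tens _ X]linextU !stwbE.
have hS := pp_restr S hp; rewrite setUIl_id in hS.
have hU := pp_restr U hp; rewrite setUIr_id in hU.
rewrite (pdom_pp hS) (pdom_pp hU) tens_osp_sum.
apply: osp_sum_eq => F1 o1 _; apply: osp_sum_eq => F2 o2 _.
have clS : forall x, x \in S -> pclass p x \subset S.
  move=> x xS; apply/subsetP => y; rewrite inE => /andP[_ yx].
  by move: li => /forallP/(_ y)/forallP/(_ x)/implyP; apply; rewrite /ple yx xS.
have clU : forall x, x \in U -> pclass p x \subset U.
  move=> x xU; apply/subsetP => y; rewrite inE => /andP[xy yx].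
  have /andP[_] := pp_mem hp xy; rewrite in_setU => /orP[yS|//].
  have xS : x \in S.
    by move: li => /forallP/(_ x)/forallP/(_ y)/implyP; apply; rewrite /ple xy yS.
  by move: (disjointP _ _ dSU x xS); rewrite xU.
congr (<< (_, _) >>); rewrite /wmap; apply/eq_in_map => L LF /=; congr (_, _).
  by rewrite wsum_restr // -(ground_osp o1); exact: mem_sub_ground.
by rewrite wsum_restr // -(ground_osp o2); exact: mem_sub_ground.
Qed.

Lemma stw_coprod (S U : {set T}) (x : {malg k[wPPb]}) : [disjoint S & U] ->
  inspan (@wPP_in T R (S :|: U)) x ->
  tensmap stw stw (linext (@wPP_comul T k R S U) x) = linext (@wSig_comul T k R S U) (stw x).
Proof.
move=> dSU; apply: (@lin_span k _ _ _ (fun x => tensmap stw stw (linext (@wPP_comul T k R S U) x))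
   (fun x => linext (@wSig_comul T k R S U) (stw x))).
- by move=> c y z; rewrite /tensmap !linext_lin.
- by move=> c y z; rewrite stw_lin linext_lin.
move=> [p w] hpw; exact: (stw_coprod_basis dSU hpw).
Qed.

End WMain2.

Section WMain3.
Variables (T : finType) (k : fieldType) (R : realType).

Lemma stw_hopf :
  hopf_monoid_morphism (@wPP_in T R) (@wSig_in T R) (@wPP_relabel T R)
    (@wSig_relabel T R)
    (@wPP_mul T k R) (@wSig_mul T k R) (@wPP_comul T k R) (@wSig_comul T k R)
    (wPP_one T R) (wSig_one T R) (@st_wPP T k R).
Proof.
split; first exact: stw_lin.
split; first exact: stw_span.
split; first exact: stw_relabel.
split; first exact: stw_unit.
split; first exact: stw_counit.
split; first exact: stw_prod.
exact: stw_coprod.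
Qed.

End WMain3.

Theorem proposition3p5 (T : finType) (k : fieldType) (R : realType) :
  hopf_monoid_morphism (@PP_in T) (@Sig_in T) (@PP_relabel T) (@Sig_relabel T)
    (@PP_mul T k) (@Sig_mul T k) (@PP_comul T k) (@Sig_comul T k)
    (PP_one T) (Sig_one T) (@st_PP T k)
  /\
  hopf_monoid_morphism (@wPP_in T R) (@wSig_in T R) (@wPP_relabel T R)
    (@wSig_relabel T R)
    (@wPP_mul T k R) (@wSig_mul T k R) (@wPP_comul T k R) (@wSig_comul T k R)
    (wPP_one T R) (wSig_one T R) (@st_wPP T k R).
Proof. split; [exact: st_hopf | exact: stw_hopf]. Qed.
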